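(* Let $X$ be a real Banach space. The following statements are equivalent. (1) $X$ is LUR. (2) $r(P_{S_X}(x,\frac1n),P_{S_X}(x',\frac1n))\to\left\|\frac{x}{\|x\|}-\frac{x'}{\|x'\|}\right\|$ for every $x,x'\in X\setminus\{0\}$. (3) $\mathrm{diam}(P_{S_X}(x,\frac1n))\to0$ for every $x\in X\setminus\{0\}$. (4) For every $x\in X\setminus\{0\}$, every minimizing sequence in $S_X$ for $x$ converges to $\frac{x}{\|x\|}$. (5) For every $x\in X\setminus\{0\}$, $P_{S_X}(x)=\{\frac{x}{\|x\|}\}$ and $P_{S_X}(x,\frac1n)\xrightarrow{V}P_{S_X}(x)$. (6) For every $x\in X\setminus\{0\}$, $P_{S_X}(x)=\{\frac{x}{\|x\|}\}$ and $P_{S_X}(x,\frac1n)\xrightarrow{H}P_{S_X}(x)$. (7) $S_X$ is strongly Chebyshev on $X\setminus\{0\}$.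
   Context: $B_X,S_X$ are the closed unit ball and unit sphere of $X$. For non-empty closed $A\subseteq X$, $x\in X$, $\delta\ge0$: $P_A(x,\delta)=\{y\in A:\|x-y\|\le\inf_{z\in A}\|x-z\|+\delta\}$, $P_A(x)=P_A(x,0)$. A minimizing sequence in $A$ for $x$ is a sequence $(y_n)$ in $A$ with $\|x-y_n\|\to\inf_{z\in A}\|x-z\|$. $A$ is strongly Chebyshev on $D$ if for each $x\in D$, $P_A(x)$ is a singleton and for every $\epsilon>0$ there is $\delta>0$ with $P_A(x,\delta)\subseteq P_A(x)+\epsilon B_X$. For non-empty bounded $A,B$, $r(A,B)=\sup\{\|a-b\|:a\in A,b\in B\}$. $X$ is LUR if $x_n\to x$ whenever $x\in S_X$, $(x_n)\subseteq S_X$ and $\|\frac{x_n+x}{2}\|\to1$. For closed bounded sets $C_n,C_0$: $C_n\xrightarrow{V}C_0$ means both (a) for every open $U\supseteq C_0$, eventually $C_n\subseteq U$, and (b) for every open $U$ with $C_0\cap U\ne\emptyset$, eventually $C_n\cap U\neq\emptyset$; $C_n\xrightarrow{H}C_0$ means for every $\epsilon>0$, eventually $C_n\subseteq C_0+\epsilon B_X$ and $C_0\subseteq C_n+\epsilon B_X$. *)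

(* Defs.v *)
From HB Require Import structures.
From mathcomp Require Import all_boot all_order all_algebra.
From mathcomp Require Import all_classical all_reals all_analysis.
Set Implicit Arguments. Unset Strict Implicit. Unset Printing Implicit Defensive.
Import Order.TTheory GRing.Theory Num.Theory.
Import numFieldNormedType.Exports.
Local Open Scope classical_set_scope.
Local Open Scope ring_scope.

Section Defs.
Context {R : realType} {X : normedModType R}.

Definition unit_ball : set X := [set x | `|x| <= 1].
Definition unit_sphere : set X := [set x | `|x| = 1].

Definition dist_set (A : set X) (x : X) : R := inf [set `|x - z| | z in A].

Definition Pnear (A : set X) (x : X) (delta : R) : set X :=
  [set y | A y /\ `|x - y| <= dist_set A x + delta].

Definition Pbest (A : set X) (x : X) : set X := Pnear A x 0.

Definition enlarge (A : set X) (eps : R) : set X :=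
  [set y | exists2 a, A a & `|y - a| <= eps].

Definition diam (A : set X) : R := sup [set `|a - b| | a in A & b in A].

Definition rAB (A B : set X) : R := sup [set `|a - b| | a in A & b in B].

Definition minimizing_seq (A : set X) (x : X) (y : nat -> X) : Prop :=
  (forall n, A (y n)) /\ ((fun n => `|x - y n|) @ \oo --> dist_set A x).

Definition strongly_chebyshev_on (A D : set X) : Prop :=
  forall x, D x ->
    (exists y, Pbest A x = [set y]) /\
    (forall eps : R, 0 < eps -> exists2 delta : R, 0 < delta &
       Pnear A x delta `<=` enlarge (Pbest A x) eps).

Definition LUR : Prop :=
  forall (x : X) (xn : nat -> X), `|x| = 1 -> (forall n, `|xn n| = 1) ->
    (fun n => `|(2 : R)^-1 *: (xn n + x)|) @ \oo --> (1 : R) ->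
    xn @ \oo --> x.

Definition vietoris_cvg (C : nat -> set X) (C0 : set X) : Prop :=
  (forall U : set X, open U -> C0 `<=` U -> \forall n \near \oo, C n `<=` U) /\
  (forall U : set X, open U -> C0 `&` U !=set0 ->
     \forall n \near \oo, C n `&` U !=set0).

Definition hausdorff_cvg (C : nat -> set X) (C0 : set X) : Prop :=
  forall eps : R, 0 < eps -> \forall n \near \oo,
    C n `<=` enlarge C0 eps /\ C0 `<=` enlarge (C n) eps.

End Defs.

(* Main.v *)
Require Import Defs.
From HB Require Import structures.
From mathcomp Require Import all_boot all_order all_algebra.
From mathcomp Require Import all_classical all_reals all_analysis.
From mathcomp Require Import lra ring.
Import Order.TTheory GRing.Theory Num.Theory.
Import numFieldNormedType.Exports.
Local Open Scope classical_set_scope.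
Local Open Scope ring_scope.
Set Implicit Arguments. Unset Strict Implicit.

Section Aux.
Context {R : realType} {X : normedModType R}.

Let S := (@unit_sphere R X).

Lemma normx_u (x : X) : x != 0 -> `|x - `|x|^-1 *: x| = `| `|x| - 1 |.
Proof.
move=> x0; have nx0 : `|x| != 0 by rewrite normr_eq0.
rewrite -{1}(scale1r x) -scalerBl normrZ -[X in _ * X](@ger0_norm _ `|x|) //.
by rewrite -normrM mulrBl mul1r mulVf.
Qed.

Lemma u_sphere (x : X) : x != 0 -> S (`|x|^-1 *: x).
Proof.
move=> x0; have nx0 : `|x| != 0 by rewrite normr_eq0.
by rewrite /S /unit_sphere /= normrZ ger0_norm ?invr_ge0 // mulVf.
Qed.

Lemma lb_sphere (x z : X) : x != 0 -> S z -> `|x - `|x|^-1 *: x| <= `|x - z|.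
Proof.
move=> x0 Sz; rewrite normx_u //; have <- : `|z| = 1 := Sz.
exact: ler_dist_dist.
Qed.

Lemma dist_sphere (x : X) : x != 0 -> dist_set S x = `|x - `|x|^-1 *: x|.
Proof.
move=> x0; rewrite /dist_set; apply/eqP; rewrite eq_le; apply/andP; split.
- have := @ge_inf R [set `|x - z| | z in S].
  move=> H; apply: H; first by exists 0 => _ [z _ <-].
  by exists (`|x|^-1 *: x) => //; exact: u_sphere.
- apply: lb_le_inf; first by exists `|x - `|x|^-1 *: x|, (`|x|^-1 *: x) => //; exact: u_sphere.
  by move=> _ [z Sz <-]; exact: lb_sphere.
Qed.

Lemma u_Pnear (x : X) d : x != 0 -> 0 <= d -> Pnear S x d (`|x|^-1 *: x).
Proof.
move=> x0 d0; split; first exact: u_sphere.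
by rewrite dist_sphere // lerDl.
Qed.

Lemma Pnear_dist (x y : X) d : x != 0 -> Pnear S x d y ->
  S y /\ `|x - `|x|^-1 *: x| <= `|x - y| <= `|x - `|x|^-1 *: x| + d.
Proof.
move=> x0 [Sy H]; split => //; rewrite -dist_sphere // H andbT.
by rewrite dist_sphere //; exact: lb_sphere.
Qed.

Lemma ev_inv (d : R) : 0 < d -> \forall n \near \oo, n.+1%:R^-1 <= d.
Proof.
move=> d0; apply: filterS (near_infty_natSinv_lt (PosNum d0)) => n /= H.
exact: ltW.
Qed.


Definition Qp (x : X) := forall e : R, 0 < e -> exists2 d : R, 0 < d &
  forall y, Pnear unit_sphere x d y -> `|y - `|x|^-1 *: x| <= e.

Definition St4 (x : X) := forall y : nat -> X,
  minimizing_seq unit_sphere x y -> y @ \oo --> `|x|^-1 *: x.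

Lemma Q_St4 x : x != 0 -> Qp x -> St4 x.
Proof.
move=> x0 Q y [Sy cy]; apply/cvgrPdist_le => e e0.
have [d d0 Hd] := Q e e0.
move/cvgrPdist_le: cy => /(_ d d0); apply: filterS => n Hn.
rewrite distrC; apply: Hd; split => //.
rewrite -(subrK (dist_set unit_sphere x) `|x - y n|) addrC lerD2l.
by rewrite (le_trans (ler_norm _)) // distrC.
Qed.

Lemma St4_Q x : x != 0 -> St4 x -> Qp x.
Proof.
move=> x0 H4 e e0; apply: contrapT => H.
have Hn : forall n : nat, exists y, Pnear unit_sphere x (n.+1%:R^-1) y /\ e < `|y - `|x|^-1 *: x|.
  move=> n; apply: contrapT => Hn; apply: H; exists n.+1%:R^-1 => // y Py.
  rewrite leNgt; apply/negP => ey; apply: Hn; by exists y.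
have [f Hf] := choice Hn.
have : f @ \oo --> `|x|^-1 *: x.
  apply: H4; split; first by move=> n; case: (Hf n) => -[].
  apply/cvgrPdist_le => eps eps0; apply: (filterS _ (ev_inv eps0)) => n Hn'.
  have [_ /andP[H1 H2]] := Pnear_dist x0 (Hf n).1.
  rewrite dist_sphere // ler_norml; apply/andP; split; move: H1 H2 Hn' eps0; set a := `|x - _ *: x|; set b := `|x - f n|; set i := n.+1%:R^-1; lra.
move/cvgrPdist_le => /(_ e e0) /filter_ex [n]; rewrite distrC leNgt.
by case: (Hf n) => _ ->.
Qed.

Lemma key (x : X) : x != 0 -> exists2 m : R, 0 < m & forall z : X, `|z| = 1 ->
  2 * m - (`|x - z| - `|x - `|x|^-1 *: x|) <= m * `|z + `|x|^-1 *: x|.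
Proof.
move=> x0; set u := `|x|^-1 *: x; set t := `|x|.
have nx0 : t != 0 by rewrite normr_eq0.
have xu : x = t *: u by rewrite /u scalerA mulfV // scale1r.
have nu : `|u| = 1 by rewrite /u normrZ ger0_norm ?invr_ge0 // mulVf.
have t0 : 0 < t by rewrite normr_gt0.
rewrite /u normx_u // -/u -/t.
have [t1|t1] := leP 1 t.
- exists 1 => // z z1; rewrite (@ger0_norm _ (t - 1)) ?subr_ge0 //.
  have : t + 1 <= `|x - z| + `|z + u|.
    have -> : t + 1 = `|(t + 1) *: u| by rewrite normrZ nu mulr1 ger0_norm // addr_ge0 // ltW.
    by rewrite (le_trans _ (ler_normD _ _)) // addrA subrK xu scalerDl scale1r.
  lra.
- exists t => // z z1; rewrite (@ler0_norm _ (t - 1)) ?subr_le0 ?(ltW t1) //.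
  have : 1 + t <= t * `|z + u| + `|z - x|.
    have -> : 1 + t = `|(1 + t) *: z| by rewrite normrZ z1 mulr1 ger0_norm // addr_ge0 // ltW.
    rewrite [t * _](_ : _ = `|t *: (z + u)|); last by rewrite normrZ ger0_norm // ltW.
    rewrite (le_trans _ (ler_normD _ _)) // scalerDl scale1r scalerDr -xu.
    by rewrite addrC -addrA (addrC x) subrK.
  rewrite distrC; lra.
Qed.

Lemma LUR_St4 : @LUR R X -> forall x : X, x != 0 -> St4 x.
Proof.
move=> L x x0 y [Sy cy]; set u := `|x|^-1 *: x.
have [m m0 Hm] := key x0.
apply: L; first exact: (u_sphere x0).
  by move=> n; exact: Sy.
apply/cvgrPdist_le => eps eps0.
have me0 : 0 < 2 * m * eps by rewrite !mulr_gt0.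
move/cvgrPdist_le: cy => /(_ _ me0); apply: filterS => n Hn.
have H := Hm (y n) (Sy n).
have Hy := lb_sphere x0 (Sy n).
have Hu : `|y n + u| <= 2.
  by rewrite (le_trans (ler_normD _ _)) // (Sy n) (u_sphere x0) -/u.
rewrite normrZ ger0_norm ?invr_ge0 //.
rewrite dist_sphere // -/u in Hn.
move: Hn; rewrite ler_norml => /andP[Hn1 Hn2].
have Hy2 : 2 - 2 * eps <= `|y n + u|.
  have : m * (2 - 2 * eps) <= m * `|y n + u|.
    apply: le_trans H.
    have -> : m * (2 - 2 * eps) = 2 * m - 2 * m * eps by ring.
    move: Hn1; set a := `|x - u|; set b := `|x - y n|; set w := 2 * m * eps; lra.
  by rewrite ler_pM2l.
rewrite ler_norml; apply/andP; split; move: Hy2 Hu eps0; set w := `|y n + u|; lra.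
Qed.

Lemma aux_inv (l : R) : 0 < l -> `|1 - l^-1| * l = `|1 - l|.
Proof.
move=> l0; rewrite -{2}(gtr0_norm l0) -normrM mulrBl mul1r mulVf ?gt_eqF //.
by rewrite distrC.
Qed.

Lemma half_id (a b : X) : a - 2^-1 *: (b + a) = 2^-1 *: (a - b).
Proof.
apply: (@scalerI _ _ 2); first by rewrite pnatr_eq0.
rewrite scalerBr !scalerA mulfV ?pnatr_eq0 // !scale1r scaler_nat mulr2n.
by rewrite opprD addrACA subrr addr0.
Qed.

Lemma St4_LUR : (forall x : X, x != 0 -> St4 x) -> @LUR R X.
Proof.
move=> H4 x xn x1 xn1 cl.
set lam := fun n => `|2^-1 *: (xn n + x)|.
set mm := fun n => 2^-1 *: (xn n + x).
set w := fun n => if lam n == 0 then x else (lam n)^-1 *: mm n.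
have x0 : x != 0 by rewrite -normr_eq0 x1 oner_neq0.
have h0 : (2^-1 : R) != 0 by rewrite invr_eq0 pnatr_eq0.
have z0 : 2^-1 *: x != 0 by rewrite scaler_eq0 negb_or h0 x0.
have nz : `|2^-1 *: x| = 2^-1 by rewrite normrZ x1 mulr1 ger0_norm // invr_ge0.
have uz : `|2^-1 *: x|^-1 *: (2^-1 *: x) = x by rewrite nz scalerA mulVf // scale1r.
have Sw : forall n, `|w n| = 1.
  move=> n; rewrite /w; case: ifP => // /negbT ln0.
  have lg0 : 0 <= lam n by exact: normr_ge0.
  rewrite normrZ (_ : `|mm n| = lam n) // ger0_norm ?invr_ge0 //. by rewrite mulVr // unitfE.
have Hmw : forall n, `|mm n - w n| = `|1 - lam n|.
  move=> n; rewrite /w; case: ifP => [/eqP l0|/negbT ln0].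
    have -> : mm n = 0 by apply/eqP; rewrite -normr_eq0; apply/eqP.
    by rewrite l0 sub0r normrN x1 subr0 normr1.
  rewrite -{1}(scale1r (mm n)) -scalerBl normrZ -/(lam n).
  apply: aux_inv; rewrite lt0r ln0; exact: normr_ge0.
have cw : w @ \oo --> x.
  rewrite -[X in _ --> X]uz; apply: H4 => //; split.
    by move=> n; exact: Sw.
  rewrite dist_sphere // normx_u // nz.
  apply/cvgrPdist_le => eps e0; move/cvgrPdist_le : cl => /(_ eps e0); apply: filterS => n Hn.
  have -> : `|2^-1 - 1| = `|2^-1 *: x - mm n|.
    have h : (2:R)^-1 - 1 = - 2^-1 by field.
    rewrite /mm -scalerBr opprD addrCA subrr addr0 normrZ normrN xn1 mulr1 h normrN //.
  rewrite (le_trans (ler_dist_dist _ _)) // opprB addrC addrA subrK distrC Hmw.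
  exact: Hn.
apply/cvgrPdist_le => eps e0.
have e4 : 0 < eps / 4 by rewrite divr_gt0.
move/cvgrPdist_le: cw => /(_ _ e4) H1; move/cvgrPdist_le: cl => /(_ _ e4) H2.
apply: (filterS2 _ _ H1 H2) => n h1 h2.
have hm : `|x - mm n| = 2^-1 * `|x - xn n|.
  by rewrite /mm half_id normrZ ger0_norm // invr_ge0.
have ht := ler_distD (w n) x (mm n).
rewrite [`|w n - mm n|]distrC Hmw hm in ht.
move: ht h1 h2; set a := `|x - xn n|; set b := `|x - w n|; set c := `|1 - lam n|; lra.
Qed.

Lemma Pnear_mono (x : X) (d d' : R) : d <= d' -> Pnear unit_sphere x d `<=` Pnear unit_sphere x d'.
Proof. by move=> dd y [Sy H]; split => //; rewrite (le_trans H) // lerD2l. Qed.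

Lemma pairs_ub (A B : set X) : A `<=` unit_sphere -> B `<=` unit_sphere ->
  has_ubound [set `|a - b| | a in A & b in B].
Proof.
move=> SA SB; exists 2 => _ [a Aa [b Bb <-]].
rewrite (le_trans (ler_normB _ _)) //.
by rewrite (SA a Aa) (SB b Bb).
Qed.

Lemma Pnear_S (x : X) (d : R) : Pnear unit_sphere x d `<=` unit_sphere.
Proof. by move=> y []. Qed.

Lemma Q_St2 (x x' : X) : x != 0 -> x' != 0 -> Qp x -> Qp x' ->
  (fun n : nat => rAB (Pnear unit_sphere x (n.+1%:R)^-1)
                      (Pnear unit_sphere x' (n.+1%:R)^-1))
    @ \oo --> Num.norm (`|x|^-1 *: x - `|x'|^-1 *: x').
Proof.
move=> x0 x'0 Q Q'; apply/cvgrPdist_le => eps e0.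
have e2 : 0 < eps / 2 by rewrite divr_gt0.
have [d d0 Hd] := Q _ e2; have [d' d'0 Hd'] := Q' _ e2.
apply: (filterS2 _ _ (ev_inv d0) (ev_inv d'0)) => n h1 h2.
set u := `|x|^-1 *: x; set u' := `|x'|^-1 *: x'.
set A := Pnear unit_sphere x n.+1%:R^-1; set B := Pnear unit_sphere x' n.+1%:R^-1.
have i0 : 0 <= n.+1%:R^-1 :> R by rewrite invr_ge0.
have uA : A u := u_Pnear x0 i0.
have uB : B u' := u_Pnear x'0 i0.
have lb : `|u - u'| <= rAB A B.
  apply: (ub_le_sup (pairs_ub (@Pnear_S _ _) (@Pnear_S _ _))).
  by exists u => //; exists u'.
have ub : rAB A B <= `|u - u'| + eps.
  apply: ge_sup; first by exists `|u - u'|, u => //; exists u'.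
  move=> _ [a Aa [b Bb <-]].
  have ha := Hd a (Pnear_mono h1 Aa); have hb := Hd' b (Pnear_mono h2 Bb).
  have t1 := ler_distD u a u'; have t2 := ler_distD u' a b.
  move: t1 t2 ha hb; set p := `|a - b|; set q := `|u - u'|; set r := `|a - u|.
  set s := `|a - u'|; set v := `|b - u'|; rewrite [`|u' - b|]distrC -/v; lra.
rewrite ler_norml; apply/andP; split; move: lb ub e0; set p := rAB A B; set q := `|u - u'|; lra.
Qed.

Lemma St3_Q (x : X) : x != 0 ->
  (fun n : nat => diam (Pnear unit_sphere x (n.+1%:R)^-1)) @ \oo --> (0 : R) ->
  Qp x.
Proof.
move=> x0 H e e0; move/cvgrPdist_le: H => /(_ e e0) /filter_ex [n Hn].
exists n.+1%:R^-1; first by rewrite invr_gt0.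
move=> y Py; set A := Pnear unit_sphere x n.+1%:R^-1 in Py Hn *.
have i0 : 0 <= n.+1%:R^-1 :> R by rewrite invr_ge0.
have uA : A (`|x|^-1 *: x) := u_Pnear x0 i0.
have : `|y - `|x|^-1 *: x| <= diam A.
  apply: (ub_le_sup (pairs_ub (@Pnear_S _ _) (@Pnear_S _ _))).
  by exists y => //; exists (`|x|^-1 *: x).
move=> h; apply: (le_trans h); move: Hn; rewrite sub0r normrN => Hn.
exact: le_trans (ler_norm _) Hn.
Qed.

Lemma Q_Pbest (x : X) : x != 0 -> Qp x ->
  Pbest unit_sphere x = [set `|x|^-1 *: x].
Proof.
move=> x0 Q; apply/seteqP; split => y; last first.
  by move=> ->; apply: u_Pnear.
move=> Py; rewrite /set1 /=; apply/eqP; rewrite -subr_eq0 -normr_eq0; apply/eqP.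
apply: le_anti; rewrite normr_ge0 andbT; rewrite leNgt; apply/negP => h.
have e2 : 0 < `|y - `|x|^-1 *: x| / 2 by rewrite divr_gt0.
have [d d0 Hd] := Q _ e2.
have := Hd y (Pnear_mono (ltW d0) Py).
move: h; set a := `|y - _|; lra.
Qed.

Lemma Q_St5 (x : X) : x != 0 -> Qp x ->
  Pbest unit_sphere x = [set `|x|^-1 *: x] /\
  vietoris_cvg (fun n : nat => Pnear unit_sphere x (n.+1%:R)^-1) (Pbest unit_sphere x).
Proof.
move=> x0 Q; have PB := Q_Pbest x0 Q; split => //; rewrite PB; split.
- move=> U oU sU; have Uu : U (`|x|^-1 *: x) by apply: sU.
  rewrite openE in oU; have := oU _ Uu; rewrite /interior => /nbhs_ballP [r r0 Hr].
  have r2 : 0 < r / 2 by rewrite divr_gt0.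
  have [d d0 Hd] := Q _ r2.
  apply: filterS (ev_inv d0) => n h y Py; apply: Hr.
  rewrite -ball_normE /ball_ /= distrC.
  have := Hd y (Pnear_mono h Py); move: r0; set a := `|_ - _|; lra.
- move=> U oU [y [Py Uy]]; rewrite /set1 /= in Py; subst y.
  apply: nearW => n; exists (`|x|^-1 *: x); split => //.
  by apply: u_Pnear; rewrite // invr_ge0.
Qed.

Lemma St5_Q (x : X) : x != 0 ->
  Pbest unit_sphere x = [set `|x|^-1 *: x] /\
  vietoris_cvg (fun n : nat => Pnear unit_sphere x (n.+1%:R)^-1) (Pbest unit_sphere x) ->
  Qp x.
Proof.
move=> x0 [PB [V1 _]] e e0.
have := V1 (ball (`|x|^-1 *: x) e) (ball_open _ _).
rewrite PB => /(_ _) /filter_ex [].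
  by move=> y ->; apply: ballxx.
move=> n Hn; exists n.+1%:R^-1; first by rewrite invr_gt0.
move=> y /Hn; rewrite -ball_normE /ball_ /= distrC => h; exact: ltW.
Qed.

Lemma Q_St6 (x : X) : x != 0 -> Qp x ->
  Pbest unit_sphere x = [set `|x|^-1 *: x] /\
  hausdorff_cvg (fun n : nat => Pnear unit_sphere x (n.+1%:R)^-1) (Pbest unit_sphere x).
Proof.
move=> x0 Q; have PB := Q_Pbest x0 Q; split => //; rewrite PB => e e0.
have [d d0 Hd] := Q _ e0.
apply: filterS (ev_inv d0) => n h; split.
  move=> y Py; exists (`|x|^-1 *: x) => //; exact: Hd (Pnear_mono h Py).
move=> y; rewrite /set1 /= => ->; exists (`|x|^-1 *: x).
  by apply: u_Pnear; rewrite // invr_ge0.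
by rewrite subrr normr0 ltW.
Qed.

Lemma St6_Q (x : X) : x != 0 ->
  Pbest unit_sphere x = [set `|x|^-1 *: x] /\
  hausdorff_cvg (fun n : nat => Pnear unit_sphere x (n.+1%:R)^-1) (Pbest unit_sphere x) ->
  Qp x.
Proof.
move=> x0 [PB H] e e0; have /filter_ex [n [Hn _]] := H e e0.
exists n.+1%:R^-1; first by rewrite invr_gt0.
move=> y /Hn [a]; rewrite PB /set1 /= => ->; done.
Qed.

Lemma Q_St7 (x : X) : x != 0 -> Qp x ->
  (exists y, Pbest unit_sphere x = [set y]) /\
  (forall eps : R, 0 < eps -> exists2 delta : R, 0 < delta &
       Pnear unit_sphere x delta `<=` enlarge (Pbest unit_sphere x) eps).
Proof.
move=> x0 Q; have PB := Q_Pbest x0 Q; split; first by exists (`|x|^-1 *: x).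
move=> e e0; have [d d0 Hd] := Q _ e0; exists d => // y Py.
by rewrite PB; exists (`|x|^-1 *: x) => //; exact: Hd.
Qed.

Lemma St7_Q (x : X) : x != 0 ->
  (exists y, Pbest unit_sphere x = [set y]) /\
  (forall eps : R, 0 < eps -> exists2 delta : R, 0 < delta &
       Pnear unit_sphere x delta `<=` enlarge (Pbest unit_sphere x) eps) ->
  Qp x.
Proof.
move=> x0 [[y0 PB] H] e e0; have [d d0 Hd] := H e e0.
have : Pbest unit_sphere x (`|x|^-1 *: x) by exact: u_Pnear.
rewrite PB /set1 /= => uy.
exists d => // y /Hd [a]; rewrite PB /set1 /= => -> h.
by rewrite uy.
Qed.
End Aux.

Theorem corollary3p8 (R : realType) (X : completeNormedModType R) :
  [<-> @LUR R X;
   (forall x x' : X, x != 0 -> x' != 0 ->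
      (fun n : nat => rAB (Pnear unit_sphere x (n.+1%:R)^-1)
                          (Pnear unit_sphere x' (n.+1%:R)^-1))
        @ \oo --> Num.norm (`|x|^-1 *: x - `|x'|^-1 *: x'));
   (forall x : X, x != 0 ->
      (fun n : nat => diam (Pnear unit_sphere x (n.+1%:R)^-1)) @ \oo --> (0 : R));
   (forall x : X, x != 0 -> forall y : nat -> X,
      minimizing_seq unit_sphere x y -> y @ \oo --> `|x|^-1 *: x);
   (forall x : X, x != 0 ->
      Pbest unit_sphere x = [set `|x|^-1 *: x] /\
      vietoris_cvg (fun n : nat => Pnear unit_sphere x (n.+1%:R)^-1)
                   (Pbest unit_sphere x));
   (forall x : X, x != 0 ->
      Pbest unit_sphere x = [set `|x|^-1 *: x] /\
      hausdorff_cvg (fun n : nat => Pnear unit_sphere x (n.+1%:R)^-1)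
                    (Pbest unit_sphere x));
   strongly_chebyshev_on (@unit_sphere R X) [set x | x != 0]].
Proof.
tfae.
- move=> L x x' x0 x'0; apply: Q_St2 => //; apply: St4_Q => //; exact: LUR_St4.
- move=> H2 x x0; have := H2 x x x0 x0; rewrite subrr normr0; exact.
- move=> H3 x x0; apply: Q_St4 => //; exact: St3_Q (H3 x x0).
- move=> H4 x x0; apply: Q_St5 => //; apply: St4_Q => //; exact: H4 x x0.
- move=> H5 x x0; exact: Q_St6 x0 (St5_Q x0 (H5 x x0)).
- move=> H6 x x0; exact: Q_St7 x0 (St6_Q x0 (H6 x x0)).
- move=> H7; apply: St4_LUR => x x0; exact: Q_St4 x0 (St7_Q x0 (H7 x x0)).
Qed.
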